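(* Let $\mathcal{M}$ be a matroid on $[n]$ and $\gamma$ a basic $\ell$-cover of $\mathcal{M}$. Then the focal complex $\mathcal{M}(\gamma)$ is (the independence complex of) a submatroid of $\mathcal{M}$, and $r(\mathcal{M}(\gamma))=r(\mathcal{M})$.
   Context: Matroids are identified with their independence complexes; $r$ denotes rank. For $\gamma:[n]\to\mathbb{N}_0$ and $S\subseteq[n]$, $\gamma(S)=\sum_{i\in S}\gamma(i)$. $\gamma$ is an $\ell$-cover of $\mathcal{M}$ if $\gamma(F)\ge\ell$ for every basis $F$ of $\mathcal{M}$, and basic if minimal among $\ell$-covers in the pointwise order. $\mathcal{M}(\gamma)$ is the simplicial complex generated by the bases $F$ of $\mathcal{M}$ with $\gamma(F)=\ell$. *)

(* Defs.v *)
(* Matroids on the ground set [n] = 'I_n, identified with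
   their independence complexes (a family of subsets of 'I_n). *)
From mathcomp Require Import all_boot all_order.
Set Implicit Arguments. Unset Strict Implicit. Unset Printing Implicit Defensive.

Definition is_matroid (n : nat) (I : {set {set 'I_n}}) : Prop :=
  [/\ set0 \in I,
      (forall A B : {set 'I_n}, B \in I -> A \subset B -> A \in I) &
      (forall A B : {set 'I_n}, A \in I -> B \in I -> #|A| < #|B| ->
         exists2 x, x \in B :\: A & x |: A \in I)].

Definition is_basis (n : nat) (I : {set {set 'I_n}}) (F : {set 'I_n}) : bool :=
  (F \in I) && [forall G in I, (F \subset G) ==> (G == F)].

Definition rank (n : nat) (I : {set {set 'I_n}}) : nat := \max_(A in I) #|A|.

Definition gsum (n : nat) (g : {ffun 'I_n -> nat}) (S : {set 'I_n}) : nat :=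
  \sum_(i in S) g i.

Definition is_cover (n : nat) (M : {set {set 'I_n}}) (g : {ffun 'I_n -> nat}) (l : nat) : Prop :=
  forall F : {set 'I_n}, is_basis M F -> l <= gsum g F.

Definition is_basic_cover (n : nat) (M : {set {set 'I_n}}) (g : {ffun 'I_n -> nat}) (l : nat) : Prop :=
  is_cover M g l /\
  (forall g' : {ffun 'I_n -> nat}, (forall i, g' i <= g i) -> is_cover M g' l -> g' = g).

Definition focal (n : nat) (M : {set {set 'I_n}}) (g : {ffun 'I_n -> nat}) (l : nat)
  : {set {set 'I_n}} :=
  [set A : {set 'I_n} | [exists F : {set 'I_n}, [&& is_basis M F, gsum g F == l & A \subset F]]].

(* Main.v *)
Require Import Defs.
From mathcomp Require Import all_boot all_order.
From mathcomp Require Import zify.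
Set Implicit Arguments. Unset Strict Implicit. Unset Printing Implicit Defensive.

Lemma mat_down n (M : {set {set 'I_n}}) (A B : {set 'I_n}) :
  is_matroid M -> B \in M -> A \subset B -> A \in M.
Proof. by case=> _ H _; apply: H. Qed.

Lemma mat_aug n (M : {set {set 'I_n}}) (A B : {set 'I_n}) :
  is_matroid M -> A \in M -> B \in M -> #|A| < #|B| ->
  exists2 x, x \in B :\: A & x |: A \in M.
Proof. by case=> _ _ H; apply: H. Qed.

Lemma aug_ext n (M : {set {set 'I_n}}) : is_matroid M -> forall k (I K : {set 'I_n}),
  #|K| - #|I| = k -> I \in M -> K \in M -> #|I| <= #|K| ->
  exists I', [/\ I' \in M, I \subset I', I' \subset I :|: K & #|I'| = #|K|].
Proof.
move=> hM; elim=> [|k IH] I K hk hI hK hle.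
  exists I; split=> //; first exact: subsetUl. lia.
have hlt : #|I| < #|K| by lia.
have [x /setDP [xK xI] hxI] := mat_aug hM hI hK hlt.
have cx : #|x |: I| = #|I|.+1 by rewrite cardsU1 xI.
have [I' [h1 h2 h3 h4]] := IH (x |: I) K ltac:(lia) hxI hK ltac:(lia).
exists I'; split=> //.
- by apply: subset_trans h2; apply: subsetUr.
- apply: subset_trans h3 _; apply/subsetP=> y; rewrite !inE.
  by case/orP=> [/orP [/eqP->|->]|->]; rewrite ?xK ?orbT.
Qed.

Lemma indep_le_basis n (M : {set {set 'I_n}}) (A B : {set 'I_n}) :
  is_matroid M -> is_basis M B -> A \in M -> #|A| <= #|B|.
Proof.
move=> hM /andP [hB /forall_inP hmax] hA; rewrite leqNgt; apply/negP=> hlt.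
have [x /setDP [xA xB] hx] := mat_aug hM hB hA hlt.
have := hmax _ hx; rewrite subsetUr /= => /eqP hE.
by move: xB; rewrite -hE setU11.
Qed.

Lemma basis_of_card n (M : {set {set 'I_n}}) (A B : {set 'I_n}) :
  is_matroid M -> is_basis M B -> A \in M -> #|B| <= #|A| -> is_basis M A.
Proof.
move=> hM hB hA hle; rewrite /is_basis hA /=; apply/forall_inP=> G hG.
apply/implyP=> hAG; rewrite eq_sym eqEcard hAG /=.
exact: leq_trans (indep_le_basis hM hB hG) hle.
Qed.

Lemma basis_exists n (M : {set {set 'I_n}}) : is_matroid M -> exists B, is_basis M B.
Proof.
move=> hM; have h0 : set0 \in M by case: hM.
case: (arg_maxnP (fun A : {set 'I_n} => #|A|) h0) => B hB hmax; have hB2 : B \in M := hB.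
exists B; rewrite /is_basis hB2 /=; apply/forall_inP=> G hG; apply/implyP=> hBG.
by rewrite eq_sym eqEcard hBG; apply: (hmax G hG).
Qed.

Lemma gsumU1 n (g : {ffun 'I_n -> nat}) x (A : {set 'I_n}) :
  x \notin A -> gsum g (x |: A) = g x + gsum g A.
Proof. by move=> h; rewrite /gsum big_setU1. Qed.

Lemma gsumD1 n (g : {ffun 'I_n -> nat}) x (A : {set 'I_n}) :
  x \in A -> gsum g A = g x + gsum g (A :\ x).
Proof. by move=> h; rewrite /gsum (big_setD1 x). Qed.

Lemma gsum_sub n (g : {ffun 'I_n -> nat}) (A B : {set 'I_n}) :
  A \subset B -> gsum g B = gsum g A + gsum g (B :\: A).
Proof. by move=> h; rewrite /gsum (big_setID A) /= (setIidPr h). Qed.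

Lemma maxP n (M : {set {set 'I_n}}) g l (F : {set 'I_n}) t (J : {set 'I_n}) :
  is_matroid M -> is_cover M g l -> is_basis M F -> gsum g F = l ->
  J \in M -> J \subset [set i | g i <= t] ->
  #|J| <= #|F :&: [set i | g i <= t]|.
Proof.
move=> hM hC hFb hFl hJ hJS.
set S := [set i | g i <= t] in hJS *; set P := F :&: S.
rewrite leqNgt; apply/negP => hlt.
have hF : F \in M by case/andP: hFb.
have hP : P \in M by apply: mat_down hM hF _; apply: subsetIl.
have [j /setDP [jJ jP] hPj] := mat_aug hM hP hJ hlt.
have jS : j \in S by apply: (subsetP hJS).
have jF : j \notin F by apply/negP=> jF; move: jP; rewrite inE jF jS.
have hle := indep_le_basis hM hFb hPj.
have [G [hG h1 h2 h3]] := aug_ext hM (erefl _) hPj hF hle.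
have hGb : is_basis M G by apply: basis_of_card hM hFb hG _; rewrite h3.
have hGl := hC _ hGb.
set H := j |: F.
have hGH : G \subset H.
  apply: subset_trans h2 _; apply/subsetP=> y; rewrite !inE.
  by case/orP=> [/orP [->|/andP [->]]|->]; rewrite ?orbT.
have eH1 : gsum g H = g j + gsum g F by rewrite gsumU1.
have eH2 := gsum_sub g hGH.
have : ~~ (H \subset G).
  apply/negP=> hHG; have := subset_leq_card hHG.
  by rewrite /H cardsU1 jF h3 ltnn.
case/subsetPn=> u uH uG.
have jG : j \in G by apply: (subsetP h1); rewrite setU11.
have uF : u \in F by move: uH; rewrite !inE; case/orP=> // /eqP eu; move: uG; rewrite eu jG.
have uS : u \notin S.
  apply/negP=> uS; move/negP: uG; apply; apply: (subsetP h1); rewrite in_setU1 /P in_setI uF uS orbT //.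
have gu : t < g u by move: uS; rewrite /S inE ltnNge.
have gj : g j <= t by move: jS; rewrite /S inE.
have hu : g u <= gsum g (H :\: G) by rewrite (gsumD1 g (x:=u)) ?leq_addr // inE uG uH.
move: hu gu gj eH1 eH2 hGl hFl.
move: (gsum g (H :\: G)) (gsum g H) (gsum g G) (gsum g F) (g u) (g j) => a b c d e f.
clear; move=> *; lia.
Qed.

Lemma exch n (M : {set {set 'I_n}}) g l (F1 F2 : {set 'I_n}) z :
  is_matroid M -> is_cover M g l -> is_basis M F1 -> gsum g F1 = l ->
  is_basis M F2 -> gsum g F2 = l -> z \in F1 -> z \notin F2 ->
  exists y, [/\ y \in F2, y \notin F1, is_basis M (y |: (F1 :\ z))
               & gsum g (y |: (F1 :\ z)) = l].
Proof.
move=> hM hC hF1b hF1l hF2b hF2l zF1 zF2.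
have hF1 : F1 \in M by case/andP: hF1b.
have hF2 : F2 \in M by case/andP: hF2b.
set S := [set i | g i <= g z].
set P := F1 :&: S; set Q := F2 :&: S.
have hP : P \in M by apply: mat_down hM hF1 _; apply: subsetIl.
have hQ : Q \in M by apply: mat_down hM hF2 _; apply: subsetIl.
have zP : z \in P by rewrite /P /S !inE zF1 leqnn.
have hPQ : #|P| <= #|Q| := maxP hM hC hF2b hF2l hP (subsetIr _ _).
have hPz : P :\ z \in M by apply: mat_down hM hP _; apply: subsetDl.
have cP := cardsD1 z P; rewrite zP in cP.
have lt : #|P :\ z| < #|Q| by move: cP hPQ; clear; move=> *; lia.
have [y /setDP [yQ yPz] hI] := mat_aug hM hPz hQ lt.
have yF2 : y \in F2 by move: yQ; rewrite /Q in_setI => /andP [].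
have yS : y \in S by move: yQ; rewrite /Q in_setI => /andP [].
have yz : y != z by apply/negP=> /eqP e; move: zF2; rewrite -e yF2.
have yF1 : y \notin F1.
  by apply/negP=> yF1; move: yPz; rewrite in_setD1 /P in_setI yz yF1 yS.
have yP : y \notin P by rewrite /P in_setI (negbTE yF1).
set I := y |: (P :\ z).
have cI : #|I| = #|P| by rewrite /I cardsU1 yPz; move: cP; clear; move=> *; lia.
have hPF : #|P| <= #|F1| by apply: subset_leq_card; apply: subsetIl.
have [I' [hI' h1 h2 h3]] := aug_ext hM (erefl _) hI hF1 ltac:(rewrite cI //).
have zI' : z \notin I'.
  apply/negP=> zI'.
  have sub : y |: P \subset I'.
    apply/subsetP=> x; rewrite in_setU1; case/orP=> [/eqP ->|xP].
      by apply: (subsetP h1); rewrite setU11.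
    case: (eqVneq x z) => [-> //|xz].
    by apply: (subsetP h1); rewrite /I in_setU1 in_setD1 xz xP orbT.
  have hyP : y |: P \in M by apply: mat_down hM hI' sub.
  have hyS : y |: P \subset S.
    apply/subsetP=> x; rewrite in_setU1; case/orP=> [/eqP -> //|].
    by rewrite /P in_setI => /andP [].
  have := maxP hM hC hF1b hF1l hyP hyS.
  by rewrite -/S -/P cardsU1 yP ltnn.
set F1' := y |: (F1 :\ z).
have sub : I' \subset F1'.
  apply/subsetP=> x xI'.
  have xz : x != z by apply/negP=> /eqP e; move: zI'; rewrite -e xI'.
  move: (subsetP h2 x xI'); rewrite /I /F1' in_setU !in_setU1 !in_setD1 xz /=.
  case/orP=> [/orP [->//|xP]|->]; last by rewrite orbT.
  by move: xP; rewrite /P in_setI => /andP [-> _]; rewrite orbT.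
have cF1' : #|F1'| = #|F1|.
  have := cardsD1 z F1; rewrite zF1 /F1' cardsU1 in_setD1 (negbTE yF1) andbF /=.
  clear; move=> *; lia.
have eI : I' = F1' by apply/eqP; rewrite eqEcard sub h3 cF1' leqnn.
have hF1'b : is_basis M F1'.
  by apply: basis_of_card hM hF1b _ _; rewrite -eI ?hI' ?h3.
exists y; split=> //.
have e1 : gsum g F1' = g y + gsum g (F1 :\ z)
  by rewrite /F1' gsumU1 // in_setD1 (negbTE yF1) andbF.
have e2 := gsumD1 g zF1.
have gy : g y <= g z by move: yS; rewrite /S inE.
have := hC _ hF1'b.
move: e1 e2 gy hF1l; rewrite -/F1'.
move: (gsum g F1') (gsum g (F1 :\ z)) (gsum g F1) (g y) (g z) => a b c d e.
clear; move=> *; lia.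
Qed.

Lemma aug_focal n (M : {set {set 'I_n}}) g l (F2 A B : {set 'I_n}) :
  is_matroid M -> is_cover M g l -> is_basis M F2 -> gsum g F2 = l ->
  B \subset F2 -> #|A| < #|B| ->
  forall F1, is_basis M F1 -> gsum g F1 = l -> A \subset F1 ->
  exists2 x, x \in B :\: A & x |: A \in focal M g l.
Proof.
move=> hM hC hF2b hF2l hBF2 hAB.
have hF2 : F2 \in M by case/andP: hF2b.
suff step : forall F1, (forall F1', #|F1' :\: F2| < #|F1 :\: F2| ->
    is_basis M F1' -> gsum g F1' = l -> A \subset F1' ->
    exists2 x, x \in B :\: A & x |: A \in focal M g l) ->
    is_basis M F1 -> gsum g F1 = l -> A \subset F1 ->
    exists2 x, x \in B :\: A & x |: A \in focal M g l.
  have : forall k F1, #|F1 :\: F2| <= k -> is_basis M F1 -> gsum g F1 = l -> A \subset F1 ->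
    exists2 x, x \in B :\: A & x |: A \in focal M g l.
    elim=> [|k IH] F1 hk; apply: step => F1' hlt.
      by move: hk hlt; clear; move=> *; lia.
    by apply: IH; move: hk hlt; clear; move=> *; lia.
  by move=> H F1; apply: H (leqnn _).
move=> F1 IH hF1b hF1l hAF1.
have hF1 : F1 \in M by case/andP: hF1b.
case: (boolP (F1 :&: B \subset A)) => hFB; last first.
  case/subsetPn: hFB => x; rewrite in_setI => /andP [xF1 xB] xA.
  exists x; first by rewrite in_setD xA xB.
  rewrite inE; apply/existsP; exists F1; rewrite hF1b hF1l eqxx /=.
  by apply/subsetP=> y; rewrite in_setU1; case/orP=> [/eqP ->//|]; apply: (subsetP hAF1).
case: (boolP (F1 :\: F2 \subset A)) => hFA.
  have s1 : B :\: A \subset F2 :\: F1.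
    apply/subsetP=> x; rewrite !in_setD => /andP [xA xB].
    rewrite (subsetP hBF2) // andbT; apply/negP=> xF1.
    by move/negP: xA; apply; apply: (subsetP hFB); rewrite in_setI xF1.
  have s2 : F1 :\: F2 \subset A :\: B.
    apply/subsetP=> x xD; rewrite in_setD (subsetP hFA) // andbT.
    move: xD; rewrite in_setD => /andP [xF2 _]; apply/negP=> xB.
    by move/negP: xF2; apply; apply: (subsetP hBF2).
  have e12 : #|F1| = #|F2|.
    by apply/eqP; rewrite eqn_leq !(indep_le_basis hM) //.
  have := subset_leq_card s1; have := subset_leq_card s2.
  rewrite !cardsD (setIC F2) (setIC B).
  have := subset_leq_card (subsetIl A B).
  move: e12 hAB; move: #|F1| #|F2| #|A| #|B| #|A :&: B| #|F1 :&: F2|.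
  clear; move=> *; lia.
case/subsetPn: hFA => z; rewrite in_setD => /andP [zF2 zF1] zA.
have [y [yF2 yF1 hb hl]] := exch hM hC hF1b hF1l hF2b hF2l zF1 zF2.
apply: IH hb hl _.
  have sub : (y |: (F1 :\ z)) :\: F2 \subset (F1 :\: F2) :\ z.
    apply/subsetP=> x; rewrite !inE.
    case/andP=> xF2; case/orP=> [/eqP e|/andP [-> ->]]; last by rewrite xF2.
    by move: xF2; rewrite e yF2.
  have := subset_leq_card sub; have := cardsD1 z (F1 :\: F2).
  rewrite in_setD zF1 zF2 /=; move: #|F1 :\: F2| #|(F1 :\: F2) :\ z| #|(y |: (F1 :\ z)) :\: F2|.
  clear; move=> *; lia.
apply/subsetP=> x xA; rewrite in_setU1 in_setD1 (subsetP hAF1) // andbT.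
by apply/orP; right; apply/negP=> /eqP e; move: zA; rewrite -e xA.
Qed.

Lemma min_exists n (M : {set {set 'I_n}}) g l :
  is_matroid M -> is_basic_cover M g l ->
  exists F0, is_basis M F0 /\ gsum g F0 = l.
Proof.
move=> hM [hC hmin].
case: (boolP [exists F, is_basis M F && (gsum g F == l)]).
  by case/existsP=> F /andP [h /eqP e]; exists F.
move=> hno.
have gt : forall F, is_basis M F -> l < gsum g F.
  move=> F hF; rewrite ltn_neqAle hC // andbT eq_sym.
  by apply/negP=> e; move/negP: hno; apply; apply/existsP; exists F; rewrite hF e.
have [B hB] := basis_exists hM.
case: (boolP [exists i, 0 < g i]); last first.
  move=> hz; have := gt _ hB; rewrite /gsum big1 // => i _.
  by apply/eqP; rewrite -leqn0 leqNgt; apply/negP=> h; move/negP: hz; apply; apply/existsP; exists i.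
case/existsP=> i gi.
pose g' := [ffun j => if j == i then (g j).-1 else g j].
have le : forall j, g' j <= g j.
  by move=> j; rewrite /g' ffunE; case: (j == i) => //; apply: leq_pred.
have key : forall F, gsum g F <= (gsum g' F).+1.
  move=> F; case: (boolP (i \in F)) => iF.
    rewrite (gsumD1 g iF) (gsumD1 g' iF).
    have -> : gsum g' (F :\ i) = gsum g (F :\ i).
      apply: eq_bigr => j; rewrite in_setD1 => /andP [ji _].
      by rewrite /g' ffunE (negbTE ji).
    rewrite /g' ffunE eqxx; move: gi; move: (g i) (gsum g (F :\ i)).
    by clear; move=> a b ha; rewrite -addSn prednK.
  have -> : gsum g' F = gsum g F.
    apply: eq_bigr => j jF; rewrite /g' ffunE; case: eqP => // e.
    by move: iF; rewrite -e jF.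
  exact: leqnSn.
have hC' : is_cover M g' l.
  move=> F hF; have := gt _ hF; have := key F.
  move: (gsum g F) (gsum g' F); clear; move=> *; lia.
have e := hmin g' le hC'.
have : g' i = g i by rewrite e.
rewrite /g' ffunE eqxx.
move: gi; move: (g i) => a ha; case: a ha => // a _ /= /eqP.
by rewrite eqn_leq ltnn andbF.
Qed.

Lemma rank_eq n (I : {set {set 'I_n}}) (F : {set 'I_n}) :
  F \in I -> (forall A, A \in I -> #|A| <= #|F|) -> rank I = #|F|.
Proof.
move=> hF hle; apply/eqP; rewrite eqn_leq; apply/andP; split.
  by apply/bigmax_leqP => A hA; apply: hle.
rewrite /rank; exact: (@leq_bigmax_cond _ (fun A => A \in I) (fun A : {set 'I_n} => #|A|) F hF).
Qed.

Theorem corollary3p6 (n : nat) (M : {set {set 'I_n}}) (g : {ffun 'I_n -> nat}) (l : nat) :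
  is_matroid M -> is_basic_cover M g l ->
  [/\ is_matroid (focal M g l), focal M g l \subset M & rank (focal M g l) = rank M].
Proof.
move=> hM hbc.
have [F0 [hF0b hF0l]] := min_exists hM hbc.
have hC : is_cover M g l by case: hbc.
have hF0 : F0 \in M by case/andP: hF0b.
have hsub : focal M g l \subset M.
  apply/subsetP=> A; rewrite inE => /existsP [F /and3P [hb _ hAF]].
  by apply: mat_down hM _ hAF; case/andP: hb.
have hF0f : F0 \in focal M g l.
  by rewrite inE; apply/existsP; exists F0; rewrite hF0b hF0l eqxx subxx.
split=> //.
- split.
  + by rewrite inE; apply/existsP; exists F0; rewrite hF0b hF0l eqxx sub0set.
  + move=> A B; rewrite !inE => /existsP [F /and3P [hb hl hBF]] hAB.
    by apply/existsP; exists F; rewrite hb hl (subset_trans hAB hBF).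
  + move=> A B; rewrite !inE => /existsP [F1 /and3P [hb1 /eqP hl1 hAF]].
    move=> /existsP [F2 /and3P [hb2 /eqP hl2 hBF]] hlt.
    exact: aug_focal hM hC hb2 hl2 hBF hlt F1 hb1 hl1 hAF.
- rewrite (rank_eq hF0f) ?(rank_eq hF0) //.
    by move=> A hA; apply: indep_le_basis hM hF0b hA.
  by move=> A hA; apply: indep_le_basis hM hF0b (subsetP hsub _ hA).
Qed.
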